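(* Let $\bm\mu=(\mu_1,\dots,\mu_r)$ be finite positive Borel measures on the unit circle with infinite supports, fix the square-root branch as in the context, let $\bm n\in\mathbb N^r$ be $\phi$-normal for $\bm\mu$, $\tau\in\partial\mathbb D$, and let $X\not\equiv0$ be a $\tau$-invariant paraorthogonal function for $\bm n$. If the polynomial $z^{(|\bm n|+1)/2}X(z)$ vanishes at two distinct points $e^{i\varphi_1}\neq e^{i\varphi_2}$ of $\partial\mathbb D$ ($\varphi_1,\varphi_2\in\mathbb R$), then $\bm n$ is not $\phi$-normal with respect to the system of real signed measures $\widehat{\bm\mu}$ given by $d\widehat\mu_j(e^{i\theta})=4\sin\frac{\theta-\varphi_1}{2}\sin\frac{\theta-\varphi_2}{2}\,d\mu_j(e^{i\theta})$, $\theta\in[t_0,t_0+2\pi)$, $j=1,\dots,r$.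
   Context: $\partial\mathbb D=\{|z|=1\}$. Fix $t_0\in\mathbb R$ and let $z^{k/2}=|z|^{k/2}\exp(ik\arg_{[t_0,t_0+2\pi)}(z)/2)$, $k\in\mathbb Z$. $|\bm n|=\sum_j n_j$; $\operatorname{span}\{z^p\}_{p=a}^b$ ($b-a\in\mathbb Z$) is the span of $z^a,\dots,z^b$. For a system $\bm\nu$ of (possibly signed) measures on $\partial\mathbb D$, $\bm n$ is $\phi$-normal w.r.t. $\bm\nu$ if there is a unique $\phi\in\operatorname{span}\{z^p\}_{p=-|\bm n|/2}^{|\bm n|/2}$ with coefficient of $z^{|\bm n|/2}$ equal to $1$ such that $\int\phi(z)z^{-p}\,d\nu_j(z)=0$ for $p=-n_j/2,\dots,n_j/2-1$, $j=1,\dots,r$. A $\tau$-invariant paraorthogonal function for $\bm n$ is any $X\in\operatorname{span}\{z^p\}_{p=-(|\bm n|+1)/2}^{(|\bm n|+1)/2}$ with $X(z)=\tau\overline{X(1/\bar z)}$ and $\int X(z)z^{-p}\,d\mu_j(z)=0$ for $p=-(n_j-1)/2,\dots,(n_j-1)/2$, $j=1,\dots,r$. *)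

(* Defs.v *)
From HB Require Import structures.
From mathcomp Require Import all_boot all_order all_algebra.
From mathcomp Require Import all_classical all_reals all_analysis.
From mathcomp Require Import complex.

Set Implicit Arguments.
Unset Strict Implicit.
Unset Printing Implicit Defensive.

Import Order.TTheory GRing.Theory Num.Theory.
Local Open Scope classical_set_scope.
Local Open Scope ring_scope.
Local Open Scope complex_scope.

Section Defs.
Variable R : realType.
Local Notation C := R[i].
Local Notation normc := (@ComplexField.Normc.normc R).

Definition expi (t : R) : C := cos t +i* sin t.

Definition circ_arc (t0 : R) : set R := `[t0, t0 + 2 * pi[%classic.

Definition argt (t0 : R) (z : C) : R :=
  xget t0 [set t | circ_arc t0 t /\ z = (normc z)%:C * expi t].

Definition zhalf (t0 : R) (k : int) (z : C) : C :=
  ((normc z) `^ (k%:~R / 2))%:C * expi (k%:~R * argt t0 z / 2).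

(* An element of span{z^p}_{p=-N/2}^{N/2} with coefficient vector c:
   sum_{m=0}^{N} c_m z^{m - N/2}  (c_N is the coefficient of z^{N/2}). *)
Definition hpoly (t0 : R) (N : nat) (c : {ffun 'I_N.+1 -> C}) (z : C) : C :=
  \sum_(m < N.+1) c m * zhalf t0 (2 * (m : nat)%:Z - N%:Z) z.

(* Complex-valued integral over the circle (parametrized by theta in
   [t0, t0+2pi)) of g against the (signed) measure w(theta) dmu(theta). *)
Definition cint_w (t0 : R) (mu : {measure set R -> \bar R}) (w : R -> R)
  (g : R -> C) : C :=
  (Rintegral mu (circ_arc t0) (fun t => w t * complex.Re (g t)))
  +i* (Rintegral mu (circ_arc t0) (fun t => w t * complex.Im (g t))).

Definition nsize (r : nat) (n : 'I_r -> nat) : nat := (\sum_(j < r) n j)%N.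

(* n is phi-normal w.r.t. the system of signed measures
   d nu_j = w(theta) d mu_j(theta):  there is a unique phi in
   span{z^p}_{p=-|n|/2}^{|n|/2} with coefficient of z^{|n|/2} equal to 1 and
   int phi(z) z^{-p} d nu_j(z) = 0 for p = -n_j/2, ..., n_j/2 - 1
   (i.e. p = l - n_j/2, l = 0..n_j-1, so -p = (n_j - 2 l)/2). *)
Definition phi_normal_cond (t0 : R) (r : nat) (mu : 'I_r -> {measure set R -> \bar R})
  (w : R -> R) (n : 'I_r -> nat) (c : {ffun 'I_(nsize n).+1 -> C}) : Prop :=
  c ord_max = 1 /\
  forall (j : 'I_r) (l : nat), (l < n j)%N ->
    cint_w t0 (mu j) w
      (fun t => hpoly t0 c (expi t) * zhalf t0 ((n j)%:Z - 2 * l%:Z) (expi t)) = 0.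

Arguments phi_normal_cond t0 [r] mu w n c.

Definition phi_normal (t0 : R) (r : nat) (mu : 'I_r -> {measure set R -> \bar R})
  (w : R -> R) (n : 'I_r -> nat) : Prop :=
  exists c, phi_normal_cond t0 mu w n c /\
    forall c', phi_normal_cond t0 mu w n c' -> c' = c.

(* X = hpoly t0 (|n|+1) d is a tau-invariant paraorthogonal function for n:
   X(z) = tau * conj(X(1/conj z)) for z <> 0, and
   int X(z) z^{-p} d mu_j(z) = 0 for p = -(n_j-1)/2, ..., (n_j-1)/2
   (p = l - (n_j-1)/2, l = 0..n_j-1, so -p = (n_j - 1 - 2 l)/2). *)
Definition paraorthogonal (t0 : R) (r : nat) (mu : 'I_r -> {measure set R -> \bar R})
  (n : 'I_r -> nat) (tau : C) (d : {ffun 'I_(nsize n).+2 -> C}) : Prop :=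
  (forall z : C, z != 0 ->
     hpoly t0 d z = tau * conjc (hpoly t0 d (conjc z)^-1)) /\
  forall (j : 'I_r) (l : nat), (l < n j)%N ->
    cint_w t0 (mu j) (fun _ => 1)
      (fun t => hpoly t0 d (expi t) * zhalf t0 ((n j)%:Z - 1 - 2 * l%:Z) (expi t)) = 0.

Arguments paraorthogonal t0 [r] mu n tau d.

Definition circ_support (t0 : R) (mu : {measure set R -> \bar R}) : set R :=
  [set t | circ_arc t0 t /\ forall e : R, 0 < e ->
     (0 < mu [set x | circ_arc t0 x /\ (normc (expi x - expi t) < e)%R])%E].

Definition hat_weight (phi1 phi2 : R) (t : R) : R :=
  4 * sin ((t - phi1) / 2) * sin ((t - phi2) / 2).

End Defs.

Arguments phi_normal_cond [R] t0 [r] mu w n c.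
Arguments paraorthogonal [R] t0 [r] mu n tau d.

(* Main.v *)
Require Import Defs.
From HB Require Import structures.
From mathcomp Require Import all_boot all_order all_algebra.
From mathcomp Require Import all_classical all_reals all_analysis.
From mathcomp Require Import complex.
From mathcomp Require Import ring lra zify.
Import Order.TTheory GRing.Theory Num.Theory.
Import numFieldNormedType.Exports.
Local Open Scope classical_set_scope.
Local Open Scope ring_scope.
Local Open Scope complex_scope.

Section S.
Variable R : realType.
Local Notation C := R[i].

Lemma oneC : (1:R)%:C = 1 :> C. Proof. by []. Qed.

Lemma expiD (a b : R) : expi (a + b) = expi a * expi b.
Proof.
rewrite /expi cosD sinD; apply/eqP; rewrite eq_complex /=.
apply/andP; split; apply/eqP; ring.
Qed.

Lemma expi0 : expi (0:R) = 1.
Proof. by rewrite /expi cos0 sin0. Qed.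

Lemma normc_expi (a : R) : ComplexField.Normc.normc (expi a) = 1.
Proof. by rewrite /expi /= cos2Dsin2 sqrtr1. Qed.

Lemma expi_neq0 (a : R) : expi a != 0.
Proof. by apply/eqP => h; have := normc_expi a; rewrite h ComplexField.Normc.normc0 => /eqP; rewrite eq_sym oner_eq0. Qed.

Lemma expiN (a : R) : expi (- a) = (expi a)^-1.
Proof.
have h : expi a * expi (- a) = 1 by rewrite -expiD subrr expi0.
by rewrite -[expi (-a)]mul1r -(mulVf (expi_neq0 a)) -mulrA h mulr1.
Qed.

Lemma expiMn (k : nat) (a : R) : expi (k%:R * a) = expi a ^+ k.
Proof.
elim: k => [|k IH]; first by rewrite mul0r expi0 expr0.
by rewrite -addn1 natrD mulrDl mul1r expiD IH exprD expr1.
Qed.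

Lemma expiMz (k : int) (a : R) : expi (k%:~R * a) = expi a ^ k.
Proof.
case: k => k; first by rewrite -pmulrn expiMn.
by rewrite NegzE mulrNz mulNr expiN -pmulrn expiMn.
Qed.

Lemma expi2pi : expi (2 * pi : R) = 1.
Proof. by rewrite /expi mulr_natl cos2pi sin2pi. Qed.

Lemma expi_per (k : int) (a : R) : expi (a + k%:~R * (2 * pi)) = expi a.
Proof. by rewrite expiD expiMz expi2pi exp1rz mulr1. Qed.

Lemma arc_uniq (t0 s t : R) : circ_arc t0 s -> circ_arc t0 t -> expi s = expi t -> s = t.
Proof.
rewrite /circ_arc /= !in_itv /= => /andP[h1 h2] /andP[h3 h4] e.
have ev : expi (s - t) = 1 by rewrite expiD expiN e mulfV // expi_neq0.
move/eqP: ev; rewrite eq_complex /= => /andP[/eqP c1 /eqP s0].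
set v := s - t in c1 s0.
have hv : v = v / 2 + v / 2 by rewrite -splitr.
have sq : sin (v / 2) ^+ 2 = 0.
  have c2 := cos2Dsin2 (v / 2).
  have c1' : cos (v/2 + v/2) = 1 by rewrite -hv.
  rewrite cosD in c1'.
  nra.

move/eqP: sq; rewrite expf_eq0 /= => /eqP sv.
have vl : v / 2 < pi by rewrite /v; lra.
have vg : - pi < v / 2 by rewrite /v; lra.
case: (ltgtP (v / 2) 0) => hv2.
- have : 0 < sin (- (v / 2)) by apply: sin_gt0_pi; apply/andP; split; lra.
  by rewrite sinN sv oppr0 ltxx.
- have : 0 < sin (v / 2) by apply: sin_gt0_pi; apply/andP; split; lra.
  by rewrite sv ltxx.
- by move: hv2; rewrite /v; lra.
Qed.

Lemma arc_exists (t0 a : R) : exists s, circ_arc t0 s /\ expi s = expi a.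
Proof.
set y := (a - t0) / (2 * pi).
exists (a + (- Num.floor y)%:~R * (2 * pi)); split; last by rewrite expi_per.
have pi0 : 0 < 2 * pi :> R by rewrite mulr_gt0 // pi_gt0.
have := floor_itv y; rewrite intrD => /andP[l u].
have l' : (Num.floor y)%:~R * (2 * pi) <= a - t0 by rewrite -ler_pdivlMr.
have u' : a - t0 < ((Num.floor y)%:~R + 1) * (2 * pi) by rewrite -ltr_pdivrMr.
move: u'; rewrite mulrDl mul1r => u'.
rewrite /circ_arc /= in_itv /= mulrNz mulNr.
apply/andP; split; lra.
Qed.

Lemma argt_circ (t0 t : R) : circ_arc t0 t -> argt t0 (expi t) = t.
Proof.
move=> ht.
have [h1 h2] : circ_arc t0 (argt t0 (expi t)) /\ expi t = (ComplexField.Normc.normc (expi t))%:C * expi (argt t0 (expi t)).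
  apply: (@xgetPex _ t0 [set s | circ_arc t0 s /\ expi t = (ComplexField.Normc.normc (expi t))%:C * expi s]).
  by exists t; split => //; rewrite normc_expi oneC mul1r.
rewrite normc_expi oneC mul1r in h2.
apply: (arc_uniq t0 _ _ h1 ht).
by rewrite -h2.
Qed.

Lemma argt_expi (t0 a : R) : expi (argt t0 (expi a)) = expi a.
Proof.
have [h1 h2] : circ_arc t0 (argt t0 (expi a)) /\ expi a = (ComplexField.Normc.normc (expi a))%:C * expi (argt t0 (expi a)).
  apply: (@xgetPex _ t0 [set s | circ_arc t0 s /\ expi a = (ComplexField.Normc.normc (expi a))%:C * expi s]).
  have [s [h1 h2]] := arc_exists t0 a.
  by exists s; split => //; rewrite normc_expi oneC mul1r.
by rewrite normc_expi oneC mul1r in h2.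
Qed.

Lemma zhalf_unit (t0 : R) (k : int) (z : C) : ComplexField.Normc.normc z = 1 ->
  zhalf t0 k z = expi (argt t0 z / 2) ^ k.
Proof. by move=> hz; rewrite /zhalf hz powR1 oneC mul1r -mulrA expiMz. Qed.
Lemma unitu (a : R) : expi a \is a GRing.unit.
Proof. by rewrite unitfE expi_neq0. Qed.

Lemma hpoly_unit (t0 : R) (K : nat) (c : {ffun 'I_K.+1 -> C}) (z : C) :
  ComplexField.Normc.normc z = 1 ->
  hpoly t0 c z = expi (argt t0 z / 2) ^ (- K%:Z) *
    (\poly_(i < K.+1) c (inord i)).[expi (argt t0 z / 2) ^+ 2].
Proof.
move=> hz; rewrite /hpoly horner_poly mulr_sumr; apply: eq_bigr => i _.
rewrite inord_val zhalf_unit //.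
have -> : (2 * (i:nat)%:Z - K%:Z) = (2 * i)%N%:Z + (- K%:Z) by rewrite PoszM.
rewrite exprzDr ?unitu // -exprM.
set a := expi _ ^+ _; set b := expi _ ^ _; rewrite /=.
have -> : b = a by [].
ring.
Qed.

Lemma sq_u (t0 a : R) : expi (argt t0 (expi a) / 2) ^+ 2 = expi a.
Proof.
by rewrite -expiMn mulrC divfK ?pnatr_eq0 // argt_expi.
Qed.

Lemma hvan (t0 : R) (K : nat) (d : {ffun 'I_K.+2 -> C}) (a : R) :
  zhalf t0 (K.+1)%:Z (expi a) * hpoly t0 d (expi a) =
  (\poly_(i < K.+2) d (inord i)).[expi a].
Proof.
rewrite zhalf_unit ?normc_expi // hpoly_unit ?normc_expi // sq_u mulrA.
by rewrite -exprzDr ?unitu // subrr expr0z mul1r.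
Qed.

Lemma ReD (x y : C) : complex.Re (x + y) = complex.Re x + complex.Re y. Proof. by move: x y => [? ?] [? ?]. Qed.
Lemma ImD (x y : C) : complex.Im (x + y) = complex.Im x + complex.Im y. Proof. by move: x y => [? ?] [? ?]. Qed.
Lemma Re_sum (I : Type) (s : seq I) (F : I -> C) : complex.Re (\sum_(i <- s) F i) = \sum_(i <- s) complex.Re (F i).
Proof. by elim/big_rec2: _ => // i x y _ <-; rewrite ReD. Qed.
Lemma Im_sum (I : Type) (s : seq I) (F : I -> C) : complex.Im (\sum_(i <- s) F i) = \sum_(i <- s) complex.Im (F i).
Proof. by elim/big_rec2: _ => // i x y _ <-; rewrite ImD. Qed.
Lemma ReM_expi (c : C) (a : R) : complex.Re (c * expi a) = complex.Re c * cos a - complex.Im c * sin a.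
Proof. by case: c => x y; rewrite /expi /=. Qed.
Lemma ImM_expi (c : C) (a : R) : complex.Im (c * expi a) = complex.Re c * sin a + complex.Im c * cos a.
Proof. by case: c => x y; rewrite /expi /=. Qed.
Lemma ReMr (r : R) (c : C) : complex.Re (r%:C * c) = r * complex.Re c.
Proof. by case: c => x y /=; ring. Qed.
Lemma ImMr (r : R) (c : C) : complex.Im (r%:C * c) = r * complex.Im c.
Proof. by case: c => x y /=; ring. Qed.

Lemma circ_sum (t0 t : R) (K : nat) (c : {ffun 'I_K.+1 -> C}) (k : int) :
  circ_arc t0 t ->
  hpoly t0 c (expi t) * zhalf t0 k (expi t) =
  \sum_(m < K.+1) c m * expi ((2 * (m:nat)%:Z - K%:Z + k)%:~R * (t / 2)).
Proof.
move=> ht; rewrite /hpoly mulr_suml; apply: eq_bigr => m _.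
rewrite !zhalf_unit ?normc_expi // argt_circ // expiMz -mulrA -exprzDr ?unitu //.
Qed.
Lemma bnd_lemma (A : set R) (f : R -> R) (M : R) :
  (forall x, A x -> `|f x| <= M) -> [bounded f x | x in A].
Proof.
move=> h; rewrite /bounded_near; near=> M' => x Ax; apply: le_trans (h x Ax) _.
near: M'; exact: nbhs_pinfty_ge (num_real M).
Unshelve. all: by end_near.
Qed.

Lemma abs_cos_le1 (x : R) : `|cos x| <= 1.
Proof. by rewrite ler_norml cos_le1 cos_geN1. Qed.
Lemma abs_sin_le1 (x : R) : `|sin x| <= 1.
Proof. by rewrite ler_norml sin_le1 sin_geN1. Qed.

Lemma integ_gen (t0 : R) (mu : {finite_measure set R -> \bar R}) (h : R -> R) (B : R)
  (hm : measurable_fun setT h) (hb : forall t, `|h t| <= B)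
  (K : nat) (a b al : 'I_K.+1 -> R) :
  mu.-integrable (circ_arc t0) (EFin \o (fun t => h t *
     \sum_(m < K.+1) (a m * cos (al m * (t / 2)) - b m * sin (al m * (t / 2))))).
Proof.
have mD : measurable (circ_arc t0) by exact: measurable_itv.
apply: measurable_bounded_integrable => //.
- by rewrite ltey_eq fin_num_measure.
- apply: measurable_funTS; apply: measurable_realfun.measurable_funM => //.
  apply: measurable_sum => m; apply: measurable_realfun.measurable_funB.
    apply: measurable_realfun.measurable_funM; first exact: measurable_cst.
    apply: measurableT_comp; first by apply: measurable_realfun.continuous_measurable_fun; exact: continuous_cos.
    apply: measurable_realfun.measurable_funM; first exact: measurable_cst.
    apply: measurable_realfun.measurable_funM; first exact: measurable_id.
    exact: measurable_cst.
  apply: measurable_realfun.measurable_funM; first exact: measurable_cst.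
  apply: measurableT_comp; first by apply: measurable_realfun.continuous_measurable_fun; exact: continuous_sin.
  apply: measurable_realfun.measurable_funM; first exact: measurable_cst.
  apply: measurable_realfun.measurable_funM; first exact: measurable_id.
  exact: measurable_cst.
- apply: (@bnd_lemma _ _ (B * \sum_(m < K.+1) (`|a m| + `|b m|))) => t _.
  rewrite normrM; apply: ler_pM => //.
  apply: le_trans (ler_norm_sum _ _ _) _.
  apply: ler_sum => m _.
  apply: le_trans (ler_normB _ _) _.
  apply: lerD; rewrite normrM -[X in _ <= X]mulr1; apply: ler_pM => //.
    exact: abs_cos_le1.
  exact: abs_sin_le1.
Qed.
Lemma hat_meas (phi1 phi2 : R) : measurable_fun setT (hat_weight phi1 phi2).
Proof.
rewrite /hat_weight.
apply: measurable_realfun.measurable_funM; first apply: measurable_realfun.measurable_funM.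
- exact: measurable_cst.
- apply: measurableT_comp; first by apply: measurable_realfun.continuous_measurable_fun; exact: continuous_sin.
  apply: measurable_realfun.measurable_funM; last exact: measurable_cst.
  apply: measurable_realfun.measurable_funB; [exact: measurable_id|exact: measurable_cst].
- apply: measurableT_comp; first by apply: measurable_realfun.continuous_measurable_fun; exact: continuous_sin.
  apply: measurable_realfun.measurable_funM; last exact: measurable_cst.
  apply: measurable_realfun.measurable_funB; [exact: measurable_id|exact: measurable_cst].
Qed.

Lemma hat_bnd (phi1 phi2 t : R) : `|hat_weight phi1 phi2 t| <= 4.
Proof.
rewrite /hat_weight !normrM -[X in _ <= X]mulr1 -mulrA; apply: ler_pM => //.
  by rewrite ger0_norm.
by rewrite -[X in _ <= X]mulr1; apply: ler_pM => //; exact: abs_sin_le1.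
Qed.

Lemma integ_Re (t0 : R) (mu : {finite_measure set R -> \bar R}) (phi1 phi2 : R)
  (K : nat) (c : {ffun 'I_K.+1 -> C}) (k : int) :
  mu.-integrable (circ_arc t0) (EFin \o (fun t => hat_weight phi1 phi2 t *
     complex.Re (hpoly t0 c (expi t) * zhalf t0 k (expi t)))).
Proof.
have := @integ_gen t0 mu _ _ (hat_meas phi1 phi2) (hat_bnd phi1 phi2) K
  (fun m => complex.Re (c m)) (fun m => complex.Im (c m))
  (fun m : 'I_K.+1 => (2 * (m:nat)%:Z - K%:Z + k)%:~R).
apply: eq_integrable; first exact: measurable_itv.
move=> t; rewrite inE => ht /=.
rewrite circ_sum // Re_sum; congr (_ * _)%:E; apply: eq_bigr => m _.
by rewrite ReM_expi.
Qed.

Lemma integ_Im (t0 : R) (mu : {finite_measure set R -> \bar R}) (phi1 phi2 : R)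
  (K : nat) (c : {ffun 'I_K.+1 -> C}) (k : int) :
  mu.-integrable (circ_arc t0) (EFin \o (fun t => hat_weight phi1 phi2 t *
     complex.Im (hpoly t0 c (expi t) * zhalf t0 k (expi t)))).
Proof.
have := @integ_gen t0 mu _ _ (hat_meas phi1 phi2) (hat_bnd phi1 phi2) K
  (fun m => complex.Im (c m)) (fun m => - complex.Re (c m))
  (fun m : 'I_K.+1 => (2 * (m:nat)%:Z - K%:Z + k)%:~R).
apply: eq_integrable; first exact: measurable_itv.
move=> t; rewrite inE => ht /=.
rewrite circ_sum // Im_sum; congr (_ * _)%:E; apply: eq_bigr => m _.
by rewrite ImM_expi mulNr opprK addrC.
Qed.
Lemma expi_sub (a b : R) : expi a - expi b = expi ((a + b) / 2) * (0 +i* (2 * sin ((a - b) / 2))).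
Proof.
have ha : a = (a + b) / 2 + (a - b) / 2 by lra.
have hb : b = (a + b) / 2 + - ((a - b) / 2) by lra.
rewrite {1}hb {1}ha !expiD -mulrBr; congr (_ * _).
rewrite /expi cosN sinN; apply/eqP; rewrite eq_complex /=.
by apply/andP; split; apply/eqP; ring.
Qed.

Lemma prod_circ (t p1 p2 : R) :
  (expi t - expi p1) * (expi t - expi p2) =
  - (hat_weight p1 p2 t)%:C * expi t * expi ((p1 + p2) / 2).
Proof.
rewrite !expi_sub.
have hI : (0 +i* (2 * sin ((t - p1) / 2))) * (0 +i* (2 * sin ((t - p2) / 2))) =
   - (hat_weight p1 p2 t)%:C.
  rewrite /hat_weight; apply/eqP; rewrite eq_complex /=.
  by apply/andP; split; apply/eqP; ring.
have hE : expi ((t + p1) / 2) * expi ((t + p2) / 2) = expi t * expi ((p1 + p2) / 2).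
  by rewrite -!expiD; congr expi; lra.
transitivity ((expi ((t + p1) / 2) * expi ((t + p2) / 2)) *
  ((0 +i* (2 * sin ((t - p1) / 2))) * (0 +i* (2 * sin ((t - p2) / 2))))); first ring.
by rewrite hI hE; ring.
Qed.
End S.

Theorem theorem4p3 (R : realType) (t0 : R) (r : nat)
  (mu : 'I_r -> {finite_measure set R -> \bar R})
  (n : 'I_r -> nat) (tau : R[i]) (d : {ffun 'I_(nsize n).+2 -> R[i]})
  (phi1 phi2 : R) :
  (* each mu_j is a finite positive Borel measure on the circle
     (parametrized by theta in [t0, t0 + 2 pi)) with infinite support *)
  (forall j, mu j (~` circ_arc t0) = 0%E) ->
  (forall j, ~ finite_set (circ_support t0 (mu j))) ->
  phi_normal t0 mu (fun _ => 1) n ->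
  ComplexField.Normc.normc tau = 1 ->
  paraorthogonal t0 mu n tau d ->
  (exists z : R[i], z != 0 /\ hpoly t0 d z != 0) ->
  expi phi1 != expi phi2 ->
  zhalf t0 (nsize n).+1%:Z (expi phi1) * hpoly t0 d (expi phi1) = 0 ->
  zhalf t0 (nsize n).+1%:Z (expi phi2) * hpoly t0 d (expi phi2) = 0 ->
  ~ phi_normal t0 mu (hat_weight phi1 phi2) n.
Proof.
move=> _ _ _ _ [_ hpara] [z0 [_ hz0]] e12 hv1 hv2 [c0 [[hc0max hc0] huniq]].
pose P := \poly_(i < (nsize n).+2) d (inord i).
have hP1 : root P (expi phi1) by apply/rootP; rewrite /P -(@hvan R t0) hv1.
have hP2 : root P (expi phi2) by apply/rootP; rewrite /P -(@hvan R t0) hv2.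
have [P1 hP1e] := factor_theorem _ _ hP1.
have hP12 : root P1 (expi phi2).
  move/rootP: hP2; rewrite hP1e hornerM hornerXsubC => /eqP.
  rewrite mulf_eq0 subr_eq0 [expi phi2 == _]eq_sym (negbTE e12) orbF => /eqP h.
  exact/rootP.
have [Q hQ] := factor_theorem _ _ hP12.
have Pnz : P != 0.
  apply/eqP => P0; move/eqP: hz0; apply; rewrite /hpoly big1 // => m _.
  have : P`_m = d m by rewrite coef_poly (ltn_ord m) inord_val.
  by rewrite P0 coef0 => <-; rewrite mul0r.
have Qnz : Q != 0 by apply: contraNneq Pnz => Q0; rewrite hP1e hQ Q0 !mul0r.
have szQ : (size Q <= nsize n)%N.
  have := size_poly (nsize n).+2 (fun i => d (inord i)); rewrite -/P hP1e hQ.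
  rewrite !size_mul ?size_XsubC ?mulf_neq0 ?polyXsubC_eq0 //.
  by rewrite (_ : 2%R = 2%N) // !addn2 /= !ltnS.
set cc := expi ((phi1 + phi2) / 2).
pose psi : {ffun 'I_(nsize n).+1 -> R[i]} := [ffun m : 'I_(nsize n).+1 => - cc * Q`_m].
have key : forall t k, circ_arc t0 t ->
    hpoly t0 d (expi t) * zhalf t0 (k - 1) (expi t) =
    (hat_weight phi1 phi2 t)%:C * (hpoly t0 psi (expi t) * zhalf t0 k (expi t)).
  move=> t k ht.
  rewrite !hpoly_unit ?normc_expi // !zhalf_unit ?normc_expi // argt_circ //.
  set u := expi (t / 2).
  have u2 : u ^+ 2 = expi t by rewrite /u -expiMn mulrC divfK.
  have Ppsi : \poly_(i < (nsize n).+1) psi (inord i) = (- cc) *: Q.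
    apply/polyP => i; rewrite coef_poly coefZ; case: ifP => hi.
      by rewrite ffunE inordK.
    rewrite nth_default ?mulr0 //; apply: leq_trans szQ _; lia.
  rewrite Ppsi hornerZ -/P hP1e hQ !hornerM !hornerXsubC u2 -mulrA [_ * (_ - _)]mulrC.
  rewrite prod_circ -u2 -/cc.
  have hu : u ^ (- ((nsize n).+1)%:Z) * u ^+ 2 * u ^ (k - 1) = u ^ (- (nsize n)%:Z) * u ^ k.
    rewrite -[u ^+ 2]/(u ^ (2%:Z)) -!exprzDr ?unitu //; congr (_ ^ _).
    rewrite -addn1 PoszD; lia.
  transitivity ((hat_weight phi1 phi2 t)%:C * (- cc) * Q.[u ^+ 2] *
     (u ^ (- ((nsize n).+1)%:Z) * u ^+ 2 * u ^ (k - 1))); first ring.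
  by rewrite hu; ring.
have mD : measurable (circ_arc t0) by exact: measurable_itv.
have hpsi : forall j l, (l < n j)%N ->
    cint_w t0 (mu j) (hat_weight phi1 phi2)
      (fun t => hpoly t0 psi (expi t) * zhalf t0 ((n j)%:Z - 2 * l%:Z) (expi t)) = 0.
  move=> j l hl; rewrite -(hpara j l hl) /cint_w.
  have ek : (n j)%:Z - 1 - 2 * l%:Z = ((n j)%:Z - 2 * l%:Z) - 1 by lia.
  congr (_ +i* _); apply: eq_Rintegral => t; rewrite inE => ht;
    by rewrite mul1r ek key // ?ReMr ?ImMr.
pose c' : {ffun 'I_(nsize n).+1 -> R[i]} := [ffun m => c0 m + psi m].
have hsum : forall z, hpoly t0 c' z = hpoly t0 c0 z + hpoly t0 psi z.
  by move=> z; rewrite /hpoly -big_split; apply: eq_bigr => m _; rewrite ffunE mulrDl.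
have hc' : phi_normal_cond t0 mu (hat_weight phi1 phi2) n c'.
  split.
    rewrite ffunE hc0max ffunE /= nth_default ?mulr0 ?addr0 //.
  move=> j l hl.
  have := hc0 j l hl; have := hpsi j l hl; rewrite /cint_w.
  move/eqP; rewrite eq_complex /= => /andP[/eqP a1 /eqP a2].
  move/eqP; rewrite eq_complex /= => /andP[/eqP b1 /eqP b2].
  rewrite (_ : Rintegral _ _ _ = Rintegral (mu j) (circ_arc t0) (fun t => hat_weight phi1 phi2 t * complex.Re (hpoly t0 c0 (expi t) * zhalf t0 ((n j)%:Z - 2 * l%:Z) (expi t))) + Rintegral (mu j) (circ_arc t0) (fun t => hat_weight phi1 phi2 t * complex.Re (hpoly t0 psi (expi t) * zhalf t0 ((n j)%:Z - 2 * l%:Z) (expi t)))); last first.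
    rewrite -RintegralD //; [|exact: integ_Re|exact: integ_Re].
    by apply: eq_Rintegral => t _; rewrite hsum mulrDl ReD mulrDr.
  rewrite [X in _ +i* X](_ : Rintegral _ _ _ = Rintegral (mu j) (circ_arc t0) (fun t => hat_weight phi1 phi2 t * complex.Im (hpoly t0 c0 (expi t) * zhalf t0 ((n j)%:Z - 2 * l%:Z) (expi t))) + Rintegral (mu j) (circ_arc t0) (fun t => hat_weight phi1 phi2 t * complex.Im (hpoly t0 psi (expi t) * zhalf t0 ((n j)%:Z - 2 * l%:Z) (expi t)))); last first.
    rewrite -RintegralD //; [|exact: integ_Im|exact: integ_Im].
    by apply: eq_Rintegral => t _; rewrite hsum mulrDl ImD mulrDr.
  by rewrite a1 a2 b1 b2 !addr0.
have hcc := huniq c' hc'.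
have psi0 : forall m, psi m = 0.
  move=> m; have := congr1 (fun f : {ffun 'I_(nsize n).+1 -> R[i]} => f m) hcc; rewrite /= ffunE => /eqP.
  by rewrite -{2}[c0 m]addr0 (inj_eq (addrI _)) => /eqP.
move/negP: Qnz; apply; apply/eqP/polyP => i; rewrite coef0.
case: (ltnP i (nsize n).+1) => hi.
  have := psi0 (Ordinal hi); rewrite ffunE /= => /eqP.
  by rewrite mulf_eq0 oppr_eq0 /cc (negbTE (expi_neq0 _ _)) /= => /eqP.
by rewrite nth_default //; apply: leq_trans szQ _; lia.
Qed.
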